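(* In the standing setting, for every $A'\in Q'$ we have $g'(A')=\bigcup_{a'\in A'}\downarrow f^{-1}(a')$, where $\downarrow f^{-1}(a')=\{b\in P:\ \exists a\in f^{-1}(a') \text{ with } b\preceq a\}$.
   Context: Standing setting: $(P,\preceq)$ is a finite poset with a bottom and a top element; $f:P\to P'$ is a surjective map onto $P'=f(P)$; $f^{-1}(a')=\{a\in P: f(a)=a'\}$; the relation $\preceq'$ on $P'$ is defined by $b'\preceq' a'$ iff there exist $a\in f^{-1}(a')$, $b\in f^{-1}(b')$ with $b\preceq a$. Assume the three conditions: (D) for all $a',b'\in P'$ with $b'\preceq' a'$ and every $a\in f^{-1}(a')$ there is $b\in f^{-1}(b')$ with $b\preceq a$; (U) for all $a',b'\in P'$ with $b'\preceq' a'$ and every $b\in f^{-1}(b')$ there is $a\in f^{-1}(a')$ with $b\preceq a$; (S) for all $a,b,c\in P$, if $c\preceq b\preceq a$ and $f(c)=f(a)$ then $f(b)=f(a)$. (Then $(P',\preceq')$ is a poset.) A down-set of a poset is a subset $A$ such that $a\in A$ and $b\preceq a$ imply $b\in A$. $Q$ is the set of nonempty down-sets of $(P,\preceq)$ and $Q'$ the set of nonempty down-sets of $(P',\preceq')$, each ordered by inclusion. $g:2^P\to 2^{P'}$ is $g(A)=\{f(a):a\in A\}$. For $A'\in Q'$, $g^{-1}(A')=\{A\in Q: g(A)=A'\}$ and $g'(A')=\bigcup_{A\in g^{-1}(A')}A$. *)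

(* Defs.v *)
From mathcomp Require Import all_boot.
Set Implicit Arguments. Unset Strict Implicit. Unset Printing Implicit Defensive.

Definition is_poset (T : finType) (le : rel T) : Prop :=
  [/\ reflexive le, antisymmetric le & transitive le].

Definition has_bottom (T : finType) (le : rel T) : Prop :=
  exists b : T, forall x, le b x.
Definition has_top (T : finType) (le : rel T) : Prop :=
  exists t : T, forall x, le x t.

Definition fiber (P P' : finType) (f : P -> P') (a' : P') : {set P} :=
  [set a | f a == a'].

Definition induced_le (P P' : finType) (le : rel P) (f : P -> P') : rel P' :=
  fun b' a' => [exists a in fiber f a', exists b in fiber f b', le b a].

Definition cond_D (P P' : finType) (le : rel P) (f : P -> P') : Prop :=
  forall a' b', induced_le le f b' a' ->
    forall a, a \in fiber f a' -> exists2 b, b \in fiber f b' & le b a.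
Definition cond_U (P P' : finType) (le : rel P) (f : P -> P') : Prop :=
  forall a' b', induced_le le f b' a' ->
    forall b, b \in fiber f b' -> exists2 a, a \in fiber f a' & le b a.
Definition cond_S (P P' : finType) (le : rel P) (f : P -> P') : Prop :=
  forall a b c, le c b -> le b a -> f c = f a -> f b = f a.

Definition downset (T : finType) (le : rel T) (A : {set T}) : bool :=
  [forall a in A, forall b, le b a ==> (b \in A)].

Definition in_Q (T : finType) (le : rel T) (A : {set T}) : bool :=
  (A != set0) && downset le A.

Definition gmap (P P' : finType) (f : P -> P') (A : {set P}) : {set P'} := f @: A.

Definition gprime (P P' : finType) (le : rel P) (f : P -> P') (A' : {set P'})
  : {set P} :=
  \bigcup_(A : {set P} | in_Q le A && (gmap f A == A')) A.

Definition down (T : finType) (le : rel T) (S : {set T}) : {set T} :=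
  [set b | [exists a in S, le b a]].

(* Main.v *)
Require Import Defs.
From mathcomp Require Import all_boot.

Theorem lemma14 (P P' : finType) (le : rel P) (f : P -> P') :
  is_poset le -> has_bottom le -> has_top le ->
  (forall a' : P', exists a : P, f a = a') ->
  cond_D le f -> cond_U le f -> cond_S le f ->
  forall A' : {set P'}, in_Q (induced_le le f) A' ->
    gprime le f A' = \bigcup_(a' in A') down le (fiber f a').
Proof.
move=> [refl _ trans] _ _ surj _ _ _ A' /andP[ne /forallP dA].
set R := \bigcup_(a' in A') _.
have memR : forall b, reflect (exists2 a, f a \in A' & le b a) (b \in R).
  move=> b; apply: (iffP bigcupP).
    move=> [a' ha']; rewrite inE => /existsP[a /andP[]]; rewrite inE => /eqP fa hb; rewrite -fa in ha'.
    by exists a.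
  move=> [a ha hb]; exists (f a) => //; rewrite inE; apply/existsP; exists a.
  by rewrite inE eqxx.
apply/eqP; rewrite eqEsubset; apply/andP; split.
  apply/bigcupsP => A /andP[/andP[_ dAd] /eqP gA].
  apply/subsetP => b bA; apply/memR; exists b; last exact: refl.
  by rewrite -gA /gmap; apply: imset_f.
apply: (bigcup_sup R).
have gR : gmap f R = A'.
  apply/setP => a'; apply/imsetP/idP.
    move=> [c /memR [a ha hca] ->].
    have := dA (f a); rewrite ha /= => /forallP /(_ (f c)); move/implyP; apply.
    rewrite /induced_le; apply/existsP; exists a; rewrite inE eqxx /=; apply/existsP; exists c.
    by rewrite inE eqxx hca.
  move=> ha'; have [a ea] := surj a'; exists a => //.
  by apply/memR; exists a; [rewrite ea | apply: refl].
rewrite gR eqxx andbT /in_Q; apply/andP; split.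
  have [a' ha'] := set0Pn _ ne.
  have [a ea] := surj a'; apply/set0Pn; exists a; apply/memR; exists a.
    by rewrite ea. exact: refl.
apply/forallP => c; apply/implyP => /memR [a ha hca].
apply/forallP => d; apply/implyP => hdc; apply/memR; exists a => //.
exact: trans hdc hca.
Qed.
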